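(* Let $\|\cdot\|$ be an arbitrary norm on $\mathbb{R}^d$ and let $A$ be an expanding real $d\times d$ matrix such that $\|\gamma\|\le\|A\gamma\|$ for all $\gamma\in\mathbb{R}^d$. Let $r:[0,\infty)\to\mathbb{R}$ be a continuous decreasing function with $r(0)=1$ and $r(s)\to0$ as $s\to\infty$. Put $\varphi(\gamma):=r(\|\gamma\|)$ and $g(\gamma):=\varphi(\gamma)-\varphi(A\gamma)$ for $\gamma\in\mathbb{R}^d$. Then: (i) $g(\gamma)\ge 0$ for all $\gamma\in\mathbb{R}^d$; (ii) $\sum_{j\in\mathbb{Z}} g(A^j\gamma)=1$ for all $\gamma\in\mathbb{R}^d\setminus\{0\}$; (iii) there exists a constant $C>0$ such that $$C\le\sum_{j\in\mathbb{Z}}|g(A^j\gamma)|^2\le 1\quad\text{for all }\gamma\in\mathbb{R}^d\setminus\{0\}.$$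
   Context: A real $d\times d$ matrix is called expanding if all of its eigenvalues have absolute value strictly greater than one. *)

(* Defs.v *)
From HB Require Import structures.
From mathcomp Require Import all_boot all_order all_algebra.
From mathcomp Require Import complex.
From mathcomp Require Import all_classical all_reals all_analysis.
Set Implicit Arguments. Unset Strict Implicit. Unset Printing Implicit Defensive.
Import Order.TTheory GRing.Theory Num.Theory.
Import numFieldNormedType.Exports.
Local Open Scope classical_set_scope.
Local Open Scope ring_scope.

Definition is_norm (R : realType) (d : nat) (N : 'cV[R]_d -> R) : Prop :=
  [/\ forall x, 0 <= N x,
      forall x, N x = 0 -> x = 0,
      forall (a : R) x, N (a *: x) = `|a| * N x
    & forall x y, N (x + y) <= N x + N y].

Definition expanding (R : realType) (d : nat) (A : 'M[R]_d) : Prop :=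
  forall z : complex (R : rcfType),
    eigenvalue (map_mx (real_complex (R : rcfType)) A) z ->
    1 < ComplexField.Normc.normc z.

Definition mxpowz (R : realType) (d : nat) (A : 'M[R]_d) (j : int) : 'M[R]_d :=
  match j with
  | Posz n => A ^+ n
  | Negz n => (invmx A) ^+ n.+1
  end.

(* Bi-infinite sum over Z: sum_{j in Z} a j = l means both one-sided series
   sum_{n >= 0} a n and sum_{n >= 1} a (-n) converge, with sum of limits l. *)
Definition zsum_to (R : realType) (a : int -> R) (l : R) : Prop :=
  exists l1 l2 : R,
    [/\ series (fun n : nat => a (Posz n)) @ \oo --> l1,
        series (fun n : nat => a (Negz n)) @ \oo --> l2
      & l1 + l2 = l].

(* Main.v *)
Require Import Defs.
From HB Require Import structures.
From mathcomp Require Import all_boot all_order all_algebra.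
From mathcomp Require Import complex.
From mathcomp Require Import all_classical all_reals all_analysis.
From mathcomp Require Import ring lra.
Import Order.TTheory GRing.Theory Num.Theory.
Import numFieldNormedType.Exports.
Local Open Scope classical_set_scope.
Local Open Scope ring_scope.

Section H.
Variable R : realType.
Lemma seq_cvgP (u : nat -> R) l : u @ \oo --> l <->
  forall e, 0 < e -> exists N, forall n, (N <= n)%N -> `|l - u n| < e.
Proof.
rewrite cvgrPdist_lt; split=> H e /H.
  by case=> N _ HN; exists N.
by case=> N HN; exists N.
Qed.

Lemma rec_to0 (a b : nat -> R) q : 0 <= q -> q < 1 -> (forall n, 0 <= a n) ->
  (forall n, a n.+1 <= q * a n + b n) -> b @ \oo --> 0 -> a @ \oo --> 0.
Proof.
move=> q0 q1 a0 Hab /seq_cvgP Hb; apply/seq_cvgP => e e0.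
have e1 : 0 < e * (1 - q) / 2 by apply: divr_gt0 => //; apply: mulr_gt0; lra.
have [N HN] := Hb _ e1.
have claim : forall k, a (N + k)%N <= q ^+ k * a N + e / 2.
  elim=> [|k IH]; first by rewrite addn0 expr0 mul1r; lra.
  rewrite addnS; apply: le_trans (Hab _) _.
  have := HN (N + k)%N (leq_addr _ _); rewrite sub0r normrN => /ltW/ler_normlP [_ hb].
  rewrite exprS -mulrA.
  have : q * a (N + k)%N <= q * (q ^+ k * a N + e / 2) by apply: ler_wpM2l.
  lra.
have qk : (fun k => q ^+ k) @ \oo --> 0 by apply: cvg_expr; rewrite ger0_norm.
have e2 : 0 < e / (2 * (a N + 1)) by apply: divr_gt0 => //; have := a0 N; lra.
have [K HK] := (seq_cvgP _ _).1 qk _ e2.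
exists (N + K)%N => n Hn.
rewrite sub0r normrN ger0_norm //.
have -> : n = (N + (n - N))%N by rewrite subnKC // (leq_trans (leq_addr K N)).
apply: le_lt_trans (claim _) _.
have := HK (n - N)%N; rewrite leq_subRL ?Hn; last by apply: leq_trans (leq_addr K N) Hn.
move=> /(_ isT); rewrite sub0r normrN ger0_norm ?exprn_ge0 // => hq.
have aN := a0 N.
have : q ^+ (n - N) * a N <= e / (2 * (a N + 1)) * a N by apply: ler_wpM2r => //; exact: ltW.
have : e / (2 * (a N + 1)) * a N < e / 2.
  have aN1 : a N + 1 != 0 by apply/eqP; lra.
  rewrite (_ : e / (2 * (a N + 1)) * a N = e / 2 * (a N / (a N + 1))); last by field.
  rewrite gtr_pMr; last by lra.
  rewrite ltr_pdivrMr; lra.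
lra.
Qed.
End H.

Section Cplx.
Variable R : realType.
Local Notation C := (complex (R : rcfType)).
Local Notation nc := (@ComplexField.Normc.normc (R : rcfType)).

Lemma normcE (z : C) : `|z| = (nc z)%:C%C.
Proof. by case: z => a b; rewrite normc_def. Qed.

Lemma nc_ge0 (z : C) : 0 <= nc z.
Proof. by case: z => a b /=; rewrite sqrtr_ge0. Qed.

Lemma nc_le (x y : C) : `|x| <= `|y| -> nc x <= nc y.
Proof. by rewrite !normcE lecR. Qed.

Lemma ncB (x y : C) : nc (x - y) <= nc x + nc y.
Proof.
have := ler_normB x y; rewrite !normcE -rmorphD /=.
by rewrite lecR.
Qed.

Lemma ncR (x : R) : nc (x%:C)%C = `|x|.
Proof. by rewrite /= expr0n /= addr0 sqrtr_sqr. Qed.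

Definition Mc p m (Z : 'M[C]_(p, m)) : R := \sum_i \sum_j nc (Z i j).
Arguments Mc {p m}.

Lemma Mc_ge0 p m (Z : 'M[C]_(p, m)) : 0 <= Mc Z.
Proof. by apply: sumr_ge0 => i _; apply: sumr_ge0 => j _; apply: nc_ge0. Qed.

Lemma Mc0 p m : Mc (0 : 'M[C]_(p, m)) = 0.
Proof.
apply: big1 => i _; apply: big1 => j _.
by rewrite mxE; apply: ComplexField.Normc.normc0.
Qed.

Lemma McB p m (Z W : 'M[C]_(p, m)) : Mc (Z - W) <= Mc Z + Mc W.
Proof.
rewrite /Mc -big_split /=; apply: ler_sum => i _.
rewrite -big_split /=; apply: ler_sum => j _.
by rewrite !mxE ncB.
Qed.

Lemma McZ p m (a : C) (Z : 'M[C]_(p, m)) : Mc (a *: Z) = nc a * Mc Z.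
Proof.
rewrite /Mc mulr_sumr; apply: eq_bigr => i _; rewrite mulr_sumr.
by apply: eq_bigr => j _; rewrite mxE ComplexField.Normc.normcM.
Qed.

Lemma Mc_entry p m (Z : 'M[C]_(p, m)) i j : nc (Z i j) <= Mc Z.
Proof.
rewrite /Mc (bigD1 i) //= (bigD1 j) //= -addrA lerDl.
apply: addr_ge0; first by apply: sumr_ge0 => k _; apply: nc_ge0.
by apply: sumr_ge0 => k _; apply: sumr_ge0 => l _; apply: nc_ge0.
Qed.

Lemma cplx_decay n (Ac : 'M[C]_n.+1) m : Ac \in unitmx ->
  (forall z, eigenvalue Ac z -> 1 < nc z) ->
  forall Z : 'M[C]_(n.+1, m), (fun k => Mc (invmx Ac ^+ k *m Z)) @ \oo --> 0.
Proof.
move=> Au Aeig.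
set Bc := invmx Ac.
have [rs Hrs] := closed_field_poly_normal (char_poly Ac).
rewrite (monicP (char_poly_monic Ac)) scale1r in Hrs.
have Hroots : all (fun z => 1 < nc z) rs.
  apply/allP => z zin; apply: Aeig.
  by rewrite eigenvalue_root_char Hrs root_prod_XsubC.
have CH := Cayley_Hamilton Ac.
rewrite Hrs rmorph_prod in CH.
have BA : Bc *m Ac = 1%:M by rewrite mulVmx.
suff H : forall s, all (fun z => 1 < nc z) s -> forall Z : 'M[C]_(n.+1, m),
    (\prod_(z <- s) horner_mx Ac ('X - z%:P)) *m Z = 0 ->
    (fun k => Mc (Bc ^+ k *m Z)) @ \oo --> 0.
  by move=> Z; apply: (H rs Hroots); rewrite CH mul0mx.
elim/last_ind => [|s l IH].
  move=> _ Z; rewrite big_nil -idmxE mul1mx => ->.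
  under eq_fun do rewrite mulmx0 Mc0.
  exact: cvg_cst.
rewrite all_rcons => /andP [l1 hs] Z.
rewrite big_rcons /= rmorphB /= horner_mx_X horner_mx_C -mulmxE -mulmxA => HZ.
set W := (Ac - l%:M) *m Z in HZ.
have IHW := IH hs W HZ.
have l0 : l != 0.
  apply/eqP => l0; move: l1; rewrite l0 ComplexField.Normc.normc0; lra.
set q := nc l^-1.
have qE : q = (nc l)^-1 by rewrite /q ComplexField.Normc.normcV.
have q0 : 0 <= q by apply: nc_ge0.
have q1 : q < 1 by rewrite qE invf_lt1 //; lra.
apply: (@rec_to0 _ _ (fun k => q * Mc (Bc ^+ k.+1 *m W)) q) => //.
- by move=> k; apply: Mc_ge0.
- move=> k.
  have E : l *: (Bc ^+ k.+1 *m Z) = Bc ^+ k *m Z - Bc ^+ k.+1 *m W.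
    rewrite /W mulmxBl mul_scalar_mx mulmxBr -scalemxAr mulmxA.
    rewrite exprSr mulmxE -mulrA -mulmxE BA mulmx1.
    by rewrite opprB addrC subrK.
  have -> : Bc ^+ k.+1 *m Z = l^-1 *: (l *: (Bc ^+ k.+1 *m Z)).
    by rewrite scalerA mulVf // scale1r.
  rewrite E McZ -/q -mulrDr; apply: ler_wpM2l => //; exact: McB.
- rewrite -(mulr0 q); apply: cvgMl_tmp.
  by rewrite (cvg_shiftS (fun k => Mc (Bc ^+ k *m W))).
Qed.
End Cplx.
Arguments Mc {R p m}.
Arguments cplx_decay {R n Ac m}. Arguments Mc_entry {R p m}. Arguments Mc_ge0 {R p m}. Arguments ncR {R}.

Set Implicit Arguments. Unset Strict Implicit. Unset Printing Implicit Defensive.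

Section Norms.
Variable R : realType.

Lemma N0 d (N : 'cV[R]_d -> R) : is_norm N -> N 0 = 0.
Proof. by case=> _ _ hZ _; rewrite -(scale0r (0 : 'cV[R]_d)) hZ normr0 mul0r. Qed.

Lemma N_sum d (N : 'cV[R]_d -> R) I (s : seq I) (P : pred I) F : is_norm N ->
  N (\sum_(i <- s | P i) F i) <= \sum_(i <- s | P i) N (F i).
Proof.
move=> hN; have [_ _ _ hT] := hN.
apply: (big_ind2 (fun x y => N x <= y)); first by rewrite N0.
  by move=> x1 y1 x2 y2 h1 h2; apply: le_trans (hT _ _) _; apply: lerD.
by [].
Qed.

Lemma N_coords d (N : 'cV[R]_d -> R) v : is_norm N ->
  N v <= \sum_i `|v i 0| * N (delta_mx i 0).
Proof.
move=> hN; have [_ _ hZ _] := hN.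
have vE : v = \sum_i v i 0 *: delta_mx i 0.
  apply/matrixP => a b; rewrite summxE (bigD1 a) //= big1 ?addr0.
    by rewrite !mxE !eqxx (ord1 b) mulr1.
  by move=> i ia; rewrite !mxE eq_sym (negbTE ia) mulr0.
rewrite {1}vE; apply: le_trans (N_sum _ _ _ hN) _.
by apply: ler_sum => i _; rewrite hZ.
Qed.

Lemma N_diff d (N : 'cV[R]_d -> R) x y : is_norm N -> `|N x - N y| <= N (x - y).
Proof.
move=> hN; have [_ _ hZ hT] := hN.
have Nop : forall z, N (- z) = N z by move=> z; rewrite -scaleN1r hZ normrN normr1 mul1r.
apply/ler_normlP; split.
  have := hT (y - x) x; rewrite subrK -opprB Nop; lra.
by have := hT (x - y) y; rewrite subrK; lra.
Qed.

Lemma entry_le_mxnorm m n (x : 'M[R]_(m, n)) i j : `|x i j| <= `|x|.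
Proof.
by rewrite [leRHS]/Num.norm /= mx_normrE; apply/bigmax_geP; right => /=; exists (i, j).
Qed.

Lemma norm_equiv n (N : 'cV[R]_n.+1 -> R) : is_norm N ->
  exists2 c : R, 0 < c & forall (y : 'cV[R]_n.+1) i, `|y i 0| <= c * N y.
Proof.
move=> hN; have [Nge0 Ndef hZ hT] := hN.
pose Nr := fun v : 'rV[R]_n.+1 => N v^T.
pose M := \sum_i N (delta_mx i 0 : 'cV[R]_n.+1).
have M0 : 0 <= M by apply: sumr_ge0 => i _; apply: Nge0.
have Nr_lip : forall v w, `|Nr v - Nr w| <= `|v - w| * M.
  move=> v w; rewrite /Nr. have h1 := N_diff (v^T) (w^T) hN. apply: le_trans; first exact: h1.
  rewrite -linearB /= mulr_sumr; apply: le_trans; first exact: N_coords.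
  apply: ler_sum => i _; apply: ler_wpM2r => //.
  by rewrite mxE; apply: entry_le_mxnorm.
have Nr_cont : continuous Nr.
  move=> v; apply/(@cvgrPdist_lt _ _ _ (nbhs v) (nbhs_filter v)) => e e0.
  have eM : 0 < e / (M + 1) by apply: divr_gt0 => //; lra.
  near=> w.
  apply: le_lt_trans (Nr_lip v w) _.
  have : `|v - w| < e / (M + 1).
    near: w; apply: (@cvgr_dist_lt _ _ _ (nbhs v) (nbhs_filter v) id) => //.
  move=> h.
  have : `|v - w| * M <= e / (M + 1) * M by apply: ler_wpM2r => //; exact: ltW.
  have : e / (M + 1) * M < e.
    have M1 : M + 1 != 0 by apply/eqP; lra.
    rewrite (_ : e / (M + 1) * M = e * (M / (M + 1))); last by field.
    rewrite gtr_pMr // ltr_pdivrMr; lra.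
  lra.
pose S := [set v : 'rV[R]_n.+1 | `|v| = 1].
have Sc : compact S.
  apply: bounded_closed_compact.
    exists 1; split; first by rewrite num_real.
    by move=> M' M'1 v /= ->; exact: ltW.
  have -> : S = (fun v : 'rV[R]_n.+1 => `|v|) @^-1` [set (1:R)] by [].
  apply: preimage_closed.
    by move=> x _; apply: norm_continuous.
  exact: closed_eq.
pose v1 := const_mx 1 : 'rV[R]_n.+1.
have v1n0 : `|v1| != 0.
  rewrite normr_eq0; apply/eqP => /matrixP /(_ 0 0); rewrite !mxE => /eqP.
  by rewrite oner_eq0.
have S0 : S !=set0.
  exists (`|v1|^-1 *: v1); rewrite /S /= normrZ normrV ?unitfE // normr_id mulVf //.
have [v0 v0S v0min] := compact_EVT_min S0 Sc (continuous_subspaceT Nr_cont).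
have c0 : 0 < Nr v0.
  rewrite lt_neqAle Nge0 andbT; apply/eqP => /esym /Ndef /eqP.
  rewrite trmx_eq0 => /eqP v00.
  by move: v0S; rewrite inE /S /= v00 normr0 => /esym/eqP; rewrite oner_eq0.
exists (Nr v0)^-1; first by rewrite invr_gt0.
move=> y i.
have [->|yn0] := eqVneq y 0; first by rewrite mxE normr0 N0 // mulr0.
have wn0 : `|y^T| != 0 by rewrite normr_eq0 trmx_eq0.
have wp : 0 < `|y^T| by rewrite lt_neqAle eq_sym wn0 normr_ge0.
have := v0min (`|y^T|^-1 *: y^T).
rewrite !inE /S /= normrZ normrV ?unitfE // normr_id mulVf // => /(_ erefl).
rewrite /Nr linearZ /= trmxK hZ normrV ?unitfE // normr_id => h.
have e1 := entry_le_mxnorm (y^T) 0 i; rewrite mxE in e1.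
apply: le_trans; first exact: e1.
rewrite mulrC ler_pdivlMr //.
by rewrite mulrC -ler_pdivlMr // mulrC.
Unshelve. all: by end_near.
Qed.
End Norms.

Section Main.
Variable R : realType.
Variable n : nat.
Variable N : 'cV[R]_n.+1 -> R.
Variable A : 'M[R]_n.+1.
Hypothesis hN : is_norm N.
Hypothesis hexp : expanding A.

Lemma A_unit : A \in unitmx.
Proof.
rewrite unitmxE unitfE; apply/negP => /eqP dA0.
have : eigenvalue (map_mx (real_complex (R : rcfType)) A) 0.
  by rewrite eigenvalue_root_char /root horner_coef0 char_poly_det det_map_mx dA0 rmorph0 mulr0.
move/hexp; rewrite ComplexField.Normc.normc0; lra.
Qed.

Lemma decay : exists D : nat -> R, D @ \oo --> 0 /\
  (forall k y, N (invmx A ^+ k *m y) <= D k * N y).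
Proof.
pose Ac := map_mx (real_complex (R : rcfType)) A.
have Acu : Ac \in unitmx by rewrite map_unitmx A_unit.
have hd := cplx_decay Acu hexp (1%:M : 'M[complex (R : rcfType)]_(n.+1)).
pose dl := fun k => Mc (invmx Ac ^+ k *m 1%:M).
have ent : forall k i j, `|((invmx A ^+ k) i j)| <= dl k.
  move=> k i j; rewrite /dl mulmx1 /Ac -map_invmx -rmorphXn.
  by have := Mc_entry (map_mx (real_complex (R : rcfType)) (invmx A ^+ k)) i j; rewrite mxE ncR.
have [c c0 hc] := norm_equiv hN.
pose Ms := \sum_i N (delta_mx i 0 : 'cV[R]_n.+1).
have Ms0 : 0 <= Ms by apply: sumr_ge0 => i _; case: hN.
exists (fun k => dl k * (n.+1%:R * c * Ms)); split.
  rewrite -(mul0r (n.+1%:R * c * Ms)); exact: cvgMr_tmp.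
move=> k y.
have dl0 : 0 <= dl k by apply: Mc_ge0.
have Ny0 : 0 <= N y by case: hN.
have Hi : forall i, `|(invmx A ^+ k *m y) i 0| <= n.+1%:R * (dl k * (c * N y)).
  move=> i; rewrite mxE; apply: le_trans; first exact: ler_norm_sum.
  have -> : n.+1%:R * (dl k * (c * N y)) = \sum_(j < n.+1) (dl k * (c * N y)).
    by rewrite sumr_const card_ord mulr_natl.
  apply: ler_sum => j _; rewrite normrM; apply: ler_pM => //.
apply: le_trans; first exact: (N_coords _ hN).
apply: (@le_trans _ _ (\sum_i (n.+1%:R * (dl k * (c * N y))) * N (delta_mx i 0))).
  by apply: ler_sum => i _; apply: ler_wpM2r; [case: hN | exact: Hi].
rewrite -mulr_sumr -/Ms.
have -> : dl k * (n.+1%:R * c * Ms) * N y = n.+1%:R * (dl k * (c * N y)) * Ms by ring.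
by [].
Qed.
End Main.

Section Gen.
Variable R : realType.

Lemma tele (u : nat -> R) m : series (fun k => u k - u k.+1) m = u 0%N - u m.
Proof.
elim: m => [|m IH]; first by rewrite seriesEord /= big_ord0 subrr.
by rewrite seriesSr IH; ring.
Qed.

Lemma sq_series (a : nat -> R) (B : R) : (forall k, 0 <= a k <= 1) ->
  (forall m, series a m <= B) ->
  exists l, series (fun k => a k ^+ 2) @ \oo --> l /\ l <= B /\ 0 <= l /\
    (forall k, a k ^+ 2 <= l).
Proof.
move=> a01 aB.
pose s2 := series (fun k => a k ^+ 2).
have s2S : forall m, s2 m.+1 = s2 m + a m ^+ 2 by move=> m; rewrite /s2 seriesSr.
have nd : nondecreasing_seq s2.
  apply/nondecreasing_seqP => m; rewrite s2S lerDl; exact: sqr_ge0.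
have s2le : forall m, s2 m <= series a m.
  move=> m; rewrite /s2 !seriesEord /=; apply: ler_sum => k _.
  have := a01 k; move=> /andP [h0 h1].
  rewrite expr2; nra.
have ub : ubound (range s2) B by move=> _ [m _ <-]; apply: le_trans (s2le m) (aB m).
have hs : has_sup (range s2) by split; [exists (s2 0%N), 0%N | exists B].
exists (sup (range s2)); split; first by apply: nondecreasing_cvgn => //; exists B.
split; first by apply: ge_sup => //; exists (s2 0%N), 0%N.
have upper : forall m, s2 m <= sup (range s2).
  by move=> m; apply: sup_upper_bound => //; exists m.
split.
  apply: le_trans (upper 0%N); by rewrite /s2 seriesEord /= big_ord0.
move=> k; apply: le_trans (upper k.+1); rewrite s2S lerDr.
rewrite /s2 seriesEord /=; apply: sumr_ge0 => i _; exact: sqr_ge0.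
Qed.

Lemma pinfty_cvg0P (r : R -> R) : r s @[s --> +oo] --> 0 ->
  forall e, 0 < e -> exists M, forall s, M < s -> `|r s| < e.
Proof.
move=> /cvgr0Pnorm_lt H e /H [M [_ HM]]; by exists M.
Qed.

Lemma right_cont0 (r : R -> R) : {within `[0, +oo[, continuous r} ->
  forall e, 0 < e -> exists2 d, 0 < d & forall s, 0 <= s -> s < d -> `|r 0 - r s| < e.
Proof.
move=> /continuous_within_itvcyP [_ H] e e0.
have := (cvgrPdist_lt _ _).1 H e e0.
rewrite near_withinE => -[d /= d0 Hd].
exists d => // s s0 sd.
case: (eqVneq s 0) => [->|sn0]; first by rewrite subrr normr0.
apply: Hd; last by rewrite lt_neqAle eq_sym sn0.
by rewrite /= sub0r normrN ger0_norm.
Qed.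
End Gen.
Lemma tele' (R : realType) (u : nat -> R) m : series (fun k => u k.+1 - u k) m = u m - u 0%N.
Proof.
elim: m => [|m IH]; first by rewrite seriesEord /= big_ord0 subrr.
by rewrite seriesSr IH; ring.
Qed.

Section MainThm.
Variable R : realType.
Variable n : nat.
Variable N : 'cV[R]_n.+1 -> R.
Variable A : 'M[R]_n.+1.
Variable r : R -> R.
Hypothesis hN : is_norm N.
Hypothesis hexp : expanding A.
Hypothesis hmon : forall x : 'cV[R]_n.+1, N x <= N (A *m x).
Hypothesis hcont : {within `[0, +oo[, continuous r}.
Hypothesis hmono : forall s t : R, 0 <= s -> s <= t -> r t <= r s.
Hypothesis hr0 : r 0 = 1.
Hypothesis hlim : r s @[s --> +oo] --> 0.

Let B := invmx A.
Let gg (x : 'cV[R]_n.+1) := r (N x) - r (N (A *m x)).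

Let Nge0 x : 0 <= N x. Proof. by case: hN => H _ _ _; apply: H. Qed.
Let Ndef x : N x = 0 -> x = 0. Proof. by case: hN => _ H _ _; apply: H. Qed.

Let AB : A * B = 1.
Proof. by rewrite /B -mulmxE mulmxV // (A_unit hexp). Qed.
Let BA : B * A = 1.
Proof. by rewrite /B -mulmxE mulVmx // (A_unit hexp). Qed.

Let BkAk k : B ^+ k * A ^+ k = 1.
Proof.
elim: k => [|k IH]; first by rewrite !expr0 mulr1.
by rewrite exprSr exprS mulrA -(mulrA _ B) BA mulr1 IH.
Qed.
Let AkBk k : A ^+ k * B ^+ k = 1.
Proof.
elim: k => [|k IH]; first by rewrite !expr0 mulr1.
by rewrite exprSr exprS mulrA -(mulrA _ A) AB mulr1 IH.
Qed.

Let r_ge0 s : 0 <= s -> 0 <= r s.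
Proof.
move=> s0; rewrite leNgt; apply/negP => rs.
have rs0 : 0 < - r s by rewrite oppr_gt0.
have [M HM] := pinfty_cvg0P hlim rs0.
pose t := `|M| + s + 1.
have hM := ler_norm M; have hM0 := normr_ge0 M.
have Mt : M < t by rewrite /t; lra.
have st : s <= t by rewrite /t; lra.
have h1 := HM t Mt; have h2 := hmono s0 st.
rewrite ltr0_norm in h1; last by apply: le_lt_trans h2 rs.
lra.
Qed.

Let r_le1 s : 0 <= s -> r s <= 1.
Proof. by move=> s0; rewrite -hr0; apply: hmono. Qed.

Let gg_ge0 x : 0 <= gg x.
Proof. by rewrite /gg subr_ge0; apply: hmono. Qed.
Let gg_le1 x : gg x <= 1.
Proof. by rewrite /gg; have := r_le1 (Nge0 x); have := r_ge0 (Nge0 (A *m x)); lra. Qed.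

Let unif eta : 0 < eta -> exists K, forall k, (K <= k)%N ->
  forall w, N (B ^+ k *m w) <= eta * N w.
Proof.
move=> eta0; have [D [D0 HD]] := decay hN hexp.
have [K HK] := (seq_cvgP _ _ _).1 D0 eta eta0.
exists K => k kK w; apply: le_trans; first exact: HD.
apply: ler_wpM2r => //; have := HK k kK; rewrite sub0r normrN => h.
by apply: ltW; apply: le_lt_trans h; apply: ler_norm.
Qed.

Let growth x : x != 0 -> forall M, exists K, forall k, (K <= k)%N -> M < N (A ^+ k *m x).
Proof.
move=> xn0 M.
have Nx0 : 0 < N x by rewrite lt_neqAle Nge0 andbT; apply/eqP => /esym /Ndef; apply/eqP.
have eta0 : 0 < N x / (`|M| + 1) by apply: divr_gt0 => //; have := normr_ge0 M; lra.
have [K HK] := unif eta0.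
exists K => k kK; have := HK k kK (A ^+ k *m x).
rewrite mulmxA mulmxE BkAk -idmxE mul1mx => h.
have h2 : `|M| + 1 <= N (A ^+ k *m x).
  have M1 : 0 < `|M| + 1 by have := normr_ge0 M; lra.
  move: h; rewrite mulrAC ler_pdivlMr // => h.
  by rewrite -(ler_pM2l Nx0).
have := ler_norm M; lra.
Qed.

Let decayp x d : 0 < d -> exists K, forall k, (K <= k)%N -> N (B ^+ k *m x) < d.
Proof.
move=> d0.
have eta0 : 0 < d / (N x + 1) by apply: divr_gt0 => //; have := Nge0 x; lra.
have [K HK] := unif eta0.
exists K => k kK; apply: le_lt_trans (HK k kK x) _.
have Nx1 : 0 < N x + 1 by have := Nge0 x; lra.
rewrite mulrAC ltr_pdivrMr // ltr_pM2l //; lra.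
Qed.

Let eAB k (v : 'cV[R]_n.+1) : A *m (B ^+ k.+1 *m v) = B ^+ k *m v.
Proof. by rewrite mulmxA mulmxE exprS mulrA AB mul1r. Qed.
Let eAA k (v : 'cV[R]_n.+1) : A *m (A ^+ k *m v) = A ^+ k.+1 *m v.
Proof. by rewrite mulmxA mulmxE -exprS. Qed.

Let eBA k (v : 'cV[R]_n.+1) : B ^+ k *m (A ^+ k *m v) = v.
Proof. by rewrite mulmxA mulmxE BkAk -idmxE mul1mx. Qed.

Let ggA k x : gg (A ^+ k *m x) = r (N (A ^+ k *m x)) - r (N (A ^+ k.+1 *m x)).
Proof. by rewrite /gg mulmxA mulmxE -exprS. Qed.

Let ggB k x : gg (B ^+ k.+1 *m x) = r (N (B ^+ k.+1 *m x)) - r (N (B ^+ k *m x)).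
Proof. by rewrite /gg mulmxA mulmxE exprS mulrA AB mul1r. Qed.

Lemma part2 x : x != 0 -> zsum_to (fun j : int => gg (mxpowz A j *m x)) 1.
Proof.
move=> xn0.
exists (r (N x)), (1 - r (N x)); split; last by ring.
- apply/seq_cvgP => e e0.
  have [M HM] := pinfty_cvg0P hlim e0.
  have [K HK] := growth xn0 M.
  exists K => m mK.
  have -> : series (fun k : nat => gg (mxpowz A (Posz k) *m x)) m =
            series (fun k => r (N (A ^+ k *m x)) - r (N (A ^+ k.+1 *m x))) m.
    by congr series; apply: funext => k /=; rewrite ggA.
  rewrite tele expr0 -idmxE mul1mx.
  rewrite opprB addrC subrK; exact: HM (HK m mK).
- apply/seq_cvgP => e e0.
  have [dl dl0 Hdl] := right_cont0 hcont e0.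
  have [K HK] := decayp x dl0.
  exists K => m mK.
  have -> : series (fun k : nat => gg (mxpowz A (Negz k) *m x)) m =
            series (fun k => r (N (B ^+ k.+1 *m x)) - r (N (B ^+ k *m x))) m.
    by congr series; apply: funext => k /=; rewrite ggB.
  rewrite tele' expr0 -idmxE mul1mx.
  have := Hdl _ (Nge0 (B ^+ m *m x)) (HK m mK); rewrite hr0.
  have -> : 1 - r (N x) - (r (N (B ^+ m *m x)) - r (N x)) = 1 - r (N (B ^+ m *m x)) by ring.
  by [].
Qed.

Let powz a b : mxpowz A (a%:Z - b%:Z) = A ^+ a * B ^+ b.
Proof.
case: (leqP b a) => hab.
  have -> : a = (b + (a - b))%N by rewrite subnKC.
  have -> : (b + (a - b))%:Z - b%:Z = Posz (a - b)%N by rewrite PoszD addrC addKr.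
  by rewrite /= addnC exprD -mulrA AkBk mulr1.
have -> : b = (a + (b - a).-1.+1)%N by rewrite prednK ?subn_gt0 // subnKC // ltnW.
set c := (b - a).-1.
have -> : a%:Z - (a + c.+1)%:Z = Negz c by rewrite PoszD opprD addrA subrr add0r NegzE.
by rewrite /= exprD mulrA AkBk mul1r.
Qed.

Let pick_y s1 x : 0 < s1 -> x != 0 -> exists k m,
  N (A ^+ k *m (B ^+ m *m x)) <= s1 /\ s1 < N (A *m (A ^+ k *m (B ^+ m *m x))).
Proof.
move=> s10 xn0.
case: (lerP (N x) s1) => hx.
  have [J HJ] := growth xn0 s1.
  suff [p [h1 h2]] : exists p, N (A ^+ p *m x) <= s1 /\ s1 < N (A ^+ p.+1 *m x).
    exists p, 0%N; rewrite expr0 -idmxE mul1mx eAA; by split.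
  have : s1 < N (A ^+ J *m x) by apply: HJ.
  elim: J {HJ} => [|j IH]; first by rewrite expr0 -idmxE mul1mx; lra.
  move=> hj; case: (lerP (N (A ^+ j *m x)) s1) => h; first by exists j.
  exact: IH.
have [J HJ] := decayp x s10.
suff [m [h1 h2]] : exists m, N (B ^+ m.+1 *m x) <= s1 /\ s1 < N (B ^+ m *m x).
  exists 0%N, m.+1; rewrite expr0 -idmxE mul1mx eAB.
  by split.
have : N (B ^+ J *m x) <= s1 by apply: ltW; apply: HJ.
elim: J {HJ} => [|j IH]; first by rewrite expr0 -idmxE mul1mx; lra.
move=> hj; case: (lerP (N (B ^+ j *m x)) s1) => h; first exact: IH.
by exists j.
Qed.

Lemma part3 : exists2 C : R, 0 < C &
  forall x : 'cV[R]_n.+1, x != 0 ->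
    exists S : R, zsum_to (fun j : int => `|gg (mxpowz A j *m x)| ^+ 2) S
                  /\ C <= S <= 1.
Proof.
have q0 : 0 < 1 / 4 :> R by [].
have [dl dl0 Hdl] := right_cont0 hcont q0.
pose s1 := dl / 2.
have s10 : 0 < s1 by rewrite /s1 divr_gt0.
have hd : s1 < dl by rewrite /s1; lra.
have Hs1 : forall s, 0 <= s -> s <= s1 -> 3 / 4 < r s.
  move=> s s0 ss1; have := Hdl s s0 (le_lt_trans ss1 hd).
  rewrite hr0 => /ltr_normlP [h1 h2]; lra.
have [M HM] := pinfty_cvg0P hlim q0.
pose s0 := `|M| + 1.
have s00 : 0 < s0 by rewrite /s0; have := normr_ge0 M; lra.
have Hs0 : forall s, s0 <= s -> r s < 1 / 4.
  move=> s ss0; have := HM s; rewrite /s0 in ss0; have := ler_norm M.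
  move=> hM /(_ ltac:(lra)) /ltr_normlP [h1 h2]; lra.
have eta0 : 0 < s1 / s0 by apply: divr_gt0.
have [K HK] := unif eta0.
pose L := K.+1.
have L0 : 0 < L%:R :> R by rewrite ltr0n.
exists ((4 * L%:R)^-1 ^+ 2); first by rewrite exprn_gt0 // invr_gt0 mulr_gt0.
move=> x xn0.
have Nx := Nge0 x.
have [l1 [c1 [l1B [l10 l1t]]]] := sq_series (a := fun k => `|gg (A ^+ k *m x)|) (B := r (N x))
  (fun k => ltac:(rewrite normr_ge0 /= ger0_norm //; exact: gg_le1))
  (fun m => ltac:(
     rewrite (_ : series _ m = series (fun k => r (N (A ^+ k *m x)) - r (N (A ^+ k.+1 *m x))) m);
     [rewrite tele expr0 -idmxE mul1mx gerDl oppr_le0; exact: r_ge0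
     | by congr series; apply: funext => k /=; rewrite ger0_norm // ggA])).
have [l2 [c2 [l2B [l20 l2t]]]] := sq_series (a := fun k => `|gg (B ^+ k.+1 *m x)|) (B := 1 - r (N x))
  (fun k => ltac:(rewrite normr_ge0 /= ger0_norm //; exact: gg_le1))
  (fun m => ltac:(
     rewrite (_ : series _ m = series (fun k => r (N (B ^+ k.+1 *m x)) - r (N (B ^+ k *m x))) m);
     [rewrite tele' expr0 -idmxE mul1mx lerD2r; exact: r_le1
     | by congr series; apply: funext => k /=; rewrite ger0_norm // ggB])).
exists (l1 + l2); split.
  by exists l1, l2; split.
apply/andP; split; last by lra.
have [k [m [hy1 hy2]]] := pick_y s10 xn0.
set y := A ^+ k *m (B ^+ m *m x) in hy1 hy2.
have hL : s0 < N (A ^+ L *m y).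
  have eL : A ^+ L *m y = A ^+ K *m (A *m y) by rewrite /L exprSr -mulmxE -mulmxA.
  have := HK K (leqnn K) (A ^+ L *m y).
  rewrite {1}eL eBA => h.
  have h3 : s1 < s1 / s0 * N (A ^+ L *m y) by apply: lt_le_trans h.
  rewrite ltNge; apply/negP => h4.
  have : s1 / s0 * N (A ^+ L *m y) <= s1 / s0 * s0 by apply: ler_wpM2l => //; exact: ltW.
  rewrite divfK ?gt_eqF //; lra.
have hsum : \sum_(i < L) gg (A ^+ i *m y) = r (N y) - r (N (A ^+ L *m y)).
  have := tele (fun i => r (N (A ^+ i *m y))) L; rewrite seriesEord /= expr0 -idmxE mul1mx => <-.
  by apply: eq_bigr => i _; rewrite ggA.
have ry := Hs1 _ (Nge0 y) hy1.
have rL := Hs0 _ (ltW hL).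
have [i Hi] : exists i : 'I_L, (4 * L%:R)^-1 <= gg (A ^+ i *m y).
  case: (boolP [exists i : 'I_L, (4 * L%:R)^-1 <= gg (A ^+ i *m y)]) => [/existsP //|/existsPn H].
  exfalso.
  have : \sum_(i < L) gg (A ^+ i *m y) <= \sum_(i < L) (4 * L%:R)^-1.
    by apply: ler_sum => i _; have := H i; rewrite -ltNge => /ltW.
  rewrite sumr_const card_ord hsum.
  have -> : (4 * L%:R)^-1 *+ L = 1 / 4 :> R.
    by rewrite -mulr_natr; field; exact: lt0r_neq0.
  lra.
have hC : (4 * L%:R)^-1 ^+ 2 <= `|gg (A ^+ i *m y)| ^+ 2.
  have i0 : 0 <= (4 * L%:R)^-1 :> R by rewrite invr_ge0 mulr_ge0 // ltW.
  by rewrite ger0_norm // !expr2; apply: ler_pM.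
apply: le_trans hC _.
have ey : A ^+ i *m y = mxpowz A ((i + k)%N%:Z - m%:Z) *m x.
  by rewrite powz exprD /y !mulmxA mulmxE.
rewrite ey; case: ((i + k)%N%:Z - m%:Z) => [p|p] /=.
  by have := l1t p; lra.
by have := l2t p; lra.
Qed.

End MainThm.

Unset Implicit Arguments.

Theorem proposition2p4 (R : realType) (d : nat) (N : 'cV[R]_d -> R)
    (A : 'M[R]_d) (r : R -> R) :
  is_norm N ->
  expanding A ->
  (forall x : 'cV[R]_d, N x <= N (A *m x)) ->
  {within `[0, +oo[, continuous r} ->
  (forall s t : R, 0 <= s -> s <= t -> r t <= r s) ->
  r 0 = 1 ->
  r s @[s --> +oo] --> 0 ->
  let phi := fun x : 'cV[R]_d => r (N x) in
  let g := fun x : 'cV[R]_d => phi x - phi (A *m x) in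
  [/\ (forall x : 'cV[R]_d, 0 <= g x),
      (forall x : 'cV[R]_d, x != 0 ->
         zsum_to (fun j : int => g (mxpowz A j *m x)) 1)
    & exists2 C : R, 0 < C &
        forall x : 'cV[R]_d, x != 0 ->
          exists S : R,
            zsum_to (fun j : int => `|g (mxpowz A j *m x)| ^+ 2) S
            /\ C <= S <= 1].
Proof.
move=> hN hexp hmon hcont hmono hr0 hlim.
case: d N A hN hexp hmon => [|n] N A hN hexp hmon phi g;
  (have g0 : forall x, 0 <= g x by
    move=> x; rewrite /g /phi subr_ge0; apply: hmono (hmon x);
    case: hN => H _ _ _; apply: H).
  split => //.
    by move=> x; rewrite flatmx0 eqxx.
  by exists 1 => // x; rewrite flatmx0 eqxx.
split => //.
  by move=> x xn0; exact: (part2 hN hexp hcont hr0 hlim xn0).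
exact: (part3 hN hexp hmon hcont hmono hr0 hlim).
Qed.
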